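(* Let $\Lambda_n=\bigcup_{P\in\wp_n}P$ be the $n$-th stage of the construction, so $\Lambda=\bigcap_{n\ge1}\Lambda_n$. Then for every $\rho>0$, $$\mathcal N(\Lambda,\rho)=\inf_{n>0}\mathcal N(\Lambda_n,\rho).$$ Moreover, there exists $N_1>0$ such that $\mathcal N(\Lambda,\rho)=\mathcal N(\Lambda_n,\rho)$ for every $n>N_1$.
   Context: Let $M$ be a smooth $d$-dimensional Riemannian manifold, $N\subset M$ a compact domain with nonempty interior and piecewise smooth boundary, $U\supset N$ open. Let $g_1,\dots,g_s$ be injective $C^r$ maps ($r>1$) from $U$ into $N$ with $\|Dg\|:=\max_i\sup_x\|Dg_i(x)\|<1$, such that $g_i(U)$ are pairwise disjoint subsets of the interior of $N$ and $\partial g_i(N)\cap\partial N=\emptyset$; $\Lambda=\bigcap_{n\ge1}\bigcup_{(i_1,\dots,i_n)}g_{i_1}\circ\cdots\circ g_{i_n}(N)$, assumed volume irreducible. $\wp_n=\{g_{i_1}\circ\cdots\circ g_{i_n}(N)\}$ are the atoms of generation $n$. For a compact set $X$ and $\rho>0$, $\mathcal N(X,\rho)$ is the minimal cardinality of a finite covering of $X$ by open balls of radius $\rho$. *)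

(* Defs.v *)
From HB Require Import structures.
From mathcomp Require Import all_boot all_order all_algebra.
From mathcomp Require Import all_classical all_reals all_analysis.
Set Implicit Arguments. Unset Strict Implicit. Unset Printing Implicit Defensive.
Import Order.TTheory GRing.Theory Num.Theory.
Local Open Scope classical_set_scope.
Local Open Scope ring_scope.

Section Defs.
Context {R : realType} {M : metricType R}.

Definition ball_cover (X : set M) (rho : R) (k : nat) : Prop :=
  exists c : seq M, size c = k /\ X `<=` \bigcup_(x in [set x | x \in c]) ball x rho.

(** N(X, rho): minimal cardinality of a finite covering of X by open balls
    of radius rho (0 by convention if no finite covering exists). *)
Definition cover_num (X : set M) (rho : R) : nat :=
  match pselect (exists k, ball_cover X rho k) with
  | left ex => ex_minn (P := fun k => `[< ball_cover X rho k >])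
                 (let: ex_intro k hk := ex in ex_intro _ k (asboolT hk))
  | right _ => 0%N
  end.

Definition word_comp {s : nat} (g : 'I_s -> M -> M) (w : seq 'I_s) : M -> M :=
  foldr (fun i f => g i \o f) id w.

Definition stage {s : nat} (g : 'I_s -> M -> M) (N : set M) (n : nat) : set M :=
  \bigcup_(w in [set w : n.-tuple 'I_s | True]) (word_comp g w @` N).

Definition limit_set {s : nat} (g : 'I_s -> M -> M) (N : set M) : set M :=
  \bigcap_(n in [set n : nat | (0 < n)%N]) stage g N n.

End Defs.

(* Main.v *)
Require Import Defs.
From HB Require Import structures.
From mathcomp Require Import all_boot all_order all_algebra.
From mathcomp Require Import all_classical all_reals all_analysis.
From mathcomp Require Import ring lra.
Import Order.TTheory GRing.Theory Num.Theory.
Local Open Scope classical_set_scope.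
Local Open Scope ring_scope.

Definition ptd {T : topologicalType} (x : T) : Type := T.
HB.instance Definition _ (T : topologicalType) (x : T) := Topological.on (ptd x).
HB.instance Definition _ (T : topologicalType) (x : T) := isPointed.Build (ptd x) x.

Lemma compact_cover' (T : topologicalType) (x : T) (A : set T) :
  compact A -> cover_compact A.
Proof.
move=> hA; have e := @compact_cover (ptd x).
have : @compact (ptd x) A by []. by rewrite e.
Qed.

Section Aux.
Context {R : realType} {M : metricType R}.

Lemma ball_openM (x : M) (r : R) : open (ball x r).
Proof.
rewrite openE => y hy; move: (hy); rewrite ballEmdist /= => hd.
have e0 : 0 < (r - mdist x y) / 2 by rewrite divr_gt0 // subr_gt0.
apply: filterS (nbhsx_ballx y _ e0) => z hz.
have hxy : ball x ((r + mdist x y) / 2) y by rewrite ballEmdist /=; lra.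
have H := ball_triangle hxy hz.
have e : (r + mdist x y) / 2 + (r - mdist x y) / 2 = r by field.
by rewrite e ballEmdist in H.
Qed.

Lemma cover_numP {X : set M} {rho : R} :
  (exists k, ball_cover X rho k) ->
  ball_cover X rho (cover_num X rho) /\
  (forall k, ball_cover X rho k -> (cover_num X rho <= k)%N).
Proof.
move=> ex; rewrite /cover_num; case: pselect => [ex'|nex]; last by case: (nex ex).
case: ex' => k0 hk0.
case: ex_minnP => m /asboolP Hm Hmin; split => // k hk.
by apply: Hmin; apply/asboolP.
Qed.

Lemma cover_num_mono (X Y : set M) (rho : R) :
  X `<=` Y -> (exists k, ball_cover Y rho k) ->
  (cover_num X rho <= cover_num Y rho)%N.
Proof.
move=> XY hY; have [[c [hc1 hc2]] _] := cover_numP hY.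
have hX : ball_cover X rho (cover_num Y rho) by exists c; split => // x /XY /hc2.
by have [_ ->] := cover_numP (ex_intro _ _ hX).
Qed.

Lemma compact_ball_cover {X : set M} {rho : R} : 0 < rho -> compact X ->
  exists k, ball_cover X rho k.
Proof.
move=> hr hX.
have [[x0 _]|X0] := pselect (X !=set0); last first.
  exists 0%N; exists [::]; split => // x Xx; exfalso; apply: X0; by exists x.
have := @compact_cover' M x0 X hX M X (fun x => ball x rho).
case.
- by move=> i _; exact: ball_openM.
- by move=> x Xx; exists x => //; exact: ballxx.
move=> D' _ hD; exists (size (finmap.enum_fset D')), (finmap.enum_fset D'); split => //.
Qed.

Lemma ball_cover_sub {X Y : set M} {rho : R} : X `<=` Y ->
  (exists k, ball_cover Y rho k) -> exists k, ball_cover X rho k.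
Proof. by move=> XY [k [c [h1 h2]]]; exists k, c; split => // x /XY /h2. Qed.

Lemma max_fset (D : finmap.finset_of (Phant nat)) (n : nat) :
  n \in finmap.enum_fset D -> (n <= \max_(i <- finmap.enum_fset D) i)%N.
Proof. move=> nD. exact: (@leq_bigmax_seq _ (finmap.enum_fset D) xpredT (fun i => i) n nD isT). Qed.

Variables (s : nat) (g : 'I_s -> M -> M).

Lemma word_comp_cat (a b : seq 'I_s) x :
  word_comp g (a ++ b) x = word_comp g a (word_comp g b x).
Proof. by elim: a => [//|i a IH] /=; rewrite /word_comp /= -/(word_comp g _) IH. Qed.

End Aux.

Theorem lemma5 (R : realType) (M : metricType R) (N U : set M) (s : nat)
    (g : 'I_s -> M -> M)
    (hNc : compact N) (hNint : N° !=set0)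
    (hUo : open U) (hNU : N `<=` U)
    (hgcont : forall i, {within U, continuous g i})
    (hginj : forall i, {in U &, injective (g i)})
    (hgint : forall i, g i @` U `<=` N°)
    (hgdisj : forall i j, i != j -> g i @` U `&` g j @` U = set0)
    (hgbd : forall i, (closure (g i @` N) `\` (g i @` N)°) `&` (closure N `\` N°) = set0)
    (rho : R) (hrho : 0 < rho) :
  (forall n : nat, (0 < n)%N -> (cover_num (limit_set g N) rho <= cover_num (stage g N n) rho)%N)
  /\ (exists n : nat, (0 < n)%N /\ cover_num (limit_set g N) rho = cover_num (stage g N n) rho)
  /\ (exists N1 : nat, (0 < N1)%N /\ forall n : nat, (N1 < n)%N ->
        cover_num (limit_set g N) rho = cover_num (stage g N n) rho).
Proof.
have gN : forall i x, N x -> N (g i x).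
  by move=> i x Nx; apply: interior_subset; apply: (hgint i); exists x => //; exact: hNU.
have wN : forall (w : seq 'I_s) x, N x -> N (word_comp g w x).
  by elim => [//|i w IH] x Nx /=; rewrite /word_comp /= -/(word_comp g _); apply/gN/IH.
have stN : forall n, stage g N n `<=` N.
  by move=> n x [w _ [y Ny <-]]; exact: wN.
have stsub : forall n m, (n <= m)%N -> stage g N m `<=` stage g N n.
  move=> n m nm x [w _ [y Ny <-]].
  have hs : size (take n w) == n by rewrite size_takel // size_tuple.
  exists (Tuple hs) => //; exists (word_comp g (drop n w) y); first exact: wN.
  by rewrite /= -word_comp_cat cat_take_drop.
have Lsub : forall n, (0 < n)%N -> limit_set g N `<=` stage g N n.
  by move=> n n0 x Lx; apply: Lx.
have LN : limit_set g N `<=` N by move=> x /(Lsub 1%N isT); exact: stN.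
have Ncov := compact_ball_cover hrho hNc.
have part1 : forall n : nat, (0 < n)%N ->
    (cover_num (limit_set g N) rho <= cover_num (stage g N n) rho)%N.
  by move=> n n0; apply: cover_num_mono; [exact: Lsub|exact: ball_cover_sub (stN n) Ncov].
have wcpt : forall w : seq 'I_s, compact (word_comp g w @` N).
  elim => [|i w IH]; first by rewrite /word_comp /= image_id.
  have -> : word_comp g (i :: w) @` N = g i @` (word_comp g w @` N).
    by rewrite image_comp.
  apply: continuous_compact => //; apply: continuous_subspaceW (hgcont i).
  by move=> x [y Ny <-]; apply/hNU/wN.
have stcl : forall n, closed (stage g N n).
  move=> n; apply: compact_closed; first exact: metric_hausdorff.
  have -> : stage g N n = \big[setU/set0]_(w <- enum {: n.-tuple 'I_s}) (word_comp g w @` N).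
    rewrite -bigcup_seq /stage; apply: eq_bigcupl; split => w //= _.
    by rewrite mem_enum.
  by apply: bigsetU_compact => w _; exact: wcpt.
have [[c [hc1 hc2]] _] := cover_numP (ball_cover_sub LN Ncov).
set V := \bigcup_(x in [set x | x \in c]) ball x rho in hc2.
have Vo : open V by apply: bigcup_open => x _; exact: ball_openM.
have [m hm] : exists m, stage g N m.+1 `<=` V.
  have [x0 _] := hNint.
  have := @compact_cover' M x0 N hNc nat setT (fun n => V `|` ~` stage g N n.+1).
  case.
  - by move=> i _; apply: openU => //; exact: closed_openC.
  - move=> x Nx; have [Vx|nVx] := pselect (V x); first by exists 0%N => //; left.
    have : ~ limit_set g N x by move=> /hc2.
    move=> /existsNP [n] /not_implyP [n0 nst].
    exists n.-1 => //; right; by rewrite prednK.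
  move=> D' _ hD; exists (\max_(n <- finmap.enum_fset D') n).
  move=> x hx; have /hD [n nD [Vx|nst]] := stN _ _ hx => //.
  exfalso; apply: nst; apply: (stsub n.+1 _ _ x hx).
  rewrite ltnS; apply: max_fset; exact: nD.
have part3 : forall n, (m.+1 < n)%N ->
    cover_num (limit_set g N) rho = cover_num (stage g N n) rho.
  move=> n hn; apply/eqP; rewrite eqn_leq part1 ?andbT; last by apply: leq_ltn_trans hn.
  have [_ ->] := cover_numP (ball_cover_sub (stN n) Ncov) => //.
  exists c; split => // x /(stsub _ _ (ltnW hn)) /hm; exact.
split => //; split; first by exists m.+2; split => //; apply: part3.
by exists m.+1; split.
Qed.
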